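(* Under the standing assumptions: (i) $\Lambda=\operatorname{epi}(f-\operatorname{eco}g+\delta_A)^c$; (ii) $\Omega=\bigcup_{(x^*,y^*,\alpha)\in\operatorname{dom}\delta_A^c}\operatorname{epi}\big(f-\operatorname{eco}g-c(\cdot,(-x^*,-y^*,\alpha))-\delta_A^c(x^*,y^*,\alpha)\big)^c$.
   Context: Let $X$ be a nontrivial separated locally convex space with topological dual $X^*$, endowed with the topology $\sigma(X,X^* )$; $\langle x,x^*\rangle$ is the value of $x^*\in X^*$ at $x\in X$. Put $W:=X^*\times X^*\times\mathbb{R}$. For $y^*\in X^*$, $\alpha\in\mathbb{R}$, let $H^-_{y^*,\alpha}:=\{x\in X:\langle x,y^*\rangle<\alpha\}$. The coupling function $c:X\times W\to\overline{\mathbb{R}}$ is $c(x,(x^*,y^*,\alpha)):=\langle x,x^*\rangle$ if $\langle x,y^*\rangle<\alpha$ and $:=+\infty$ otherwise. For $h:X\to\overline{\mathbb{R}}$ its $c$-conjugate is $h^c:W\to\overline{\mathbb{R}}$, $h^c(w):=\sup_{x\in X}\{c(x,w)-h(x)\}$, with the convention $(+\infty)+(-\infty)=(-\infty)+(+\infty)=(+\infty)-(+\infty)=(-\infty)-(-\infty)=-\infty$. Epigraphs of functions on $W$ are subsets of $W\times\mathbb{R}$. $\delta_A$ is the indicator function of $A$. For $E\subseteq W\times\mathbb{R}$ and $e\in W\times\mathbb{R}$, $E-e:=\{z-e:z\in E\}$. A set $C\subseteq X\times\mathbb{R}$ is e-convex if for every point $p\notin C$ there is a continuous linear functional $\ell$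 on $X\times\mathbb{R}$ with $\ell(q-p)<0$ for all $q\in C$; a function is e-convex if its epigraph is e-convex, and $\operatorname{eco}g$ is the largest e-convex minorant of $g$ (it equals $\sup_{(u^*,v^*,\gamma)\in\operatorname{dom}g^c}\{c(\cdot,(u^*,v^*,\gamma))-g^c(u^*,v^*,\gamma)\}$ when $g$ has a proper e-convex minorant). Standing assumptions: $f,g:X\to\overline{\mathbb{R}}$ proper convex with $\operatorname{dom}f\subseteq\operatorname{dom}g$, $A\subseteq X$ nonempty, convention $(+\infty)-(+\infty)=+\infty$ in differences $f-g$, $f-\operatorname{eco}g$. Sets: $\Lambda:=\bigcap_{(u^*,v^*,\gamma)\in\operatorname{dom}g^c}\Big[\operatorname{epi}(f+\delta_A)^c-\big(u^*,0,0,g^c(u^*,v^*,\gamma)\big)\Big]$, $\Omega:=\bigcup_{(x^*,y^*,\alpha)\in\operatorname{dom}\delta_A^c}\ \bigcap_{(u^*,v^*,\gamma)\in\operatorname{dom}g^c}\Big[\operatorname{epi}\big(f-c(\cdot,(-x^*,-y^*,\alpha))\big)^c-\big(u^*,0,0,g^c(u^*,v^*,\gamma)-\delta_A^c(x^*,y^*,\alpha)\big)\Big]$. *)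

(* Defs.v *)
From mathcomp Require Import all_boot all_algebra.
From mathcomp Require Import all_classical all_reals all_analysis.
Import GRing.Theory Num.Theory numFieldNormedType.Exports.

Set Implicit Arguments.
Unset Strict Implicit.
Unset Printing Implicit Defensive.

Local Open Scope classical_set_scope.
Local Open Scope ring_scope.

Section EvenConvexity.
Context {R : realType} {X : tvsType R}.

(* X^* : the topological dual of X, i.e. continuous linear functionals.
   Elements of X^* are represented by their underlying functions X -> R. *)
Definition is_dual (xs : X -> R) : Prop :=
  (forall (a : R) (x y : X), xs (a *: x + y) = a * xs x + xs y) /\ continuous xs.

(* W := X^* x X^* x R, carried by (X -> R) * (X -> R) * R and cut out by inW *)
Definition W := ((X -> R) * (X -> R) * R)%type.
Definition inW (w : W) : Prop := is_dual w.1.1 /\ is_dual w.1.2.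

Definition coupling (x : X) (w : W) : \bar R :=
  if w.1.2 x < w.2 then (w.1.1 x)%:E else +oo%E.

(* c-conjugate, with the (standard mathcomp) convention
   (+oo)+(-oo) = (+oo)-(+oo) = (-oo)-(-oo) = -oo *)
Definition cconj (h : X -> \bar R) (w : W) : \bar R :=
  ereal_sup (range (fun x => (coupling x w - h x)%E)).

Definition epiW (k : W -> \bar R) : set (W * R) :=
  [set p | inW p.1 /\ (k p.1 <= p.2%:E)%E].

Definition domW (k : W -> \bar R) : set W :=
  [set w | inW w /\ (k w < +oo)%E].

Definition translate (E : set (W * R)) (e : W * R) : set (W * R) :=
  [set z - e | z in E].

Definition deltaI (A : set X) (x : X) : \bar R :=
  if `[< A x >] then 0%E else +oo%E.

Definition epiX (h : X -> \bar R) : set (X * R) :=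
  [set p | (h p.1 <= p.2%:E)%E].

Definition econvex_set (C : set (X * R)) : Prop :=
  forall p : X * R, ~ C p ->
    exists l : X * R -> R,
      (forall (a : R) (u v : X * R), l (a *: u + v) = a * l u + l v) /\
      continuous l /\
      (forall q, C q -> l (q - p) < 0).

Definition econvex_fun (h : X -> \bar R) : Prop := econvex_set (epiX h).

(* eco g : the largest e-convex minorant of g (pointwise supremum of all
   e-convex minorants, which is itself e-convex) *)
Definition eco (g : X -> \bar R) (x : X) : \bar R :=
  ereal_sup [set h x | h in [set h : X -> \bar R |
                                econvex_fun h /\ forall y, (h y <= g y)%E]].

Definition proper_fun (f : X -> \bar R) : Prop :=
  (exists x, (f x < +oo)%E) /\ (forall x, (-oo < f x)%E).

Definition convex_fun (f : X -> \bar R) : Prop :=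
  forall (x y : X) (a b t : R), 0 <= t <= 1 ->
    (f x <= a%:E)%E -> (f y <= b%:E)%E ->
    (f (t *: x + (1 - t) *: y)%R <= (t * a + (1 - t) * b)%:E)%E.

(* difference with the convention (+oo) - (+oo) = +oo (dual ereal subtraction) *)
Definition diff_pinfty (f g : X -> \bar R) (x : X) : \bar R :=
  (f x - g x)%dE.

Definition Lambda (f g : X -> \bar R) (A : set X) : set (W * R) :=
  [set p | inW p.1 /\
    forall u : W, domW (cconj g) u ->
      translate (epiW (cconj (fun x => f x + deltaI A x)%E))
                ((u.1.1, 0, 0), fine (cconj g u)) p].

Definition Omega (f g : X -> \bar R) (A : set X) : set (W * R) :=
  [set p | inW p.1 /\
    exists w : W, domW (cconj (deltaI A)) w /\
      forall u : W, domW (cconj g) u ->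
        translate
          (epiW (cconj (fun x => f x - coupling x ((- w.1.1, - w.1.2, w.2)%R))%E))
          ((u.1.1, 0, 0), fine (cconj g u - cconj (deltaI A) w)%E) p].

Definition Omega_rhs (f g : X -> \bar R) (A : set X) : set (W * R) :=
  [set p | exists w : W, domW (cconj (deltaI A)) w /\
      epiW (cconj (fun x => diff_pinfty f (eco g) x
                       - coupling x ((- w.1.1, - w.1.2, w.2)%R)
                       - cconj (deltaI A) w)%E) p].

End EvenConvexity.

(* Main.v *)
Require Import Defs.
From mathcomp Require Import all_boot all_algebra.
From mathcomp Require Import all_classical all_reals all_analysis.
From mathcomp Require Import all_order ring lra.
Import Order.TTheory GRing.Theory Num.Theory numFieldNormedType.Exports.
Local Open Scope classical_set_scope.
Local Open Scope ring_scope.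

Section Helpers.
Context {R : realType} {X : tvsType R}.
Local Notation W := (W (R:=R) (X:=X)).

Lemma pairdec (y : X) (s : R) : (y, s) = (y, 0) + s *: (0, 1).
Proof. apply: injective_projections => /=. by rewrite scaler0 addr0. rewrite add0r; exact: (esym (mulr1 _)). Qed.
Lemma paireq (a : R) (y z : X) : (a *: y + z, (0:R)) = a *: (y, 0) + (z, 0).
Proof. apply: injective_projections => //=. rewrite addr0. exact: (esym (mulr0 _)). Qed.

Lemma fstc (u : X -> R) : continuous u -> continuous (fun q : X * R => u q.1).
Proof. move=> cu q. apply: (@continuous_comp _ _ _ fst u q) => //. exact: cvg_fst. exact: cu. Qed.
Lemma sndc : continuous (fun q : X * R => q.2).
Proof. move=> q. exact: cvg_snd. Qed.
Lemma pairc : continuous (fun y : X => (y, (0:R))).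
Proof. move=> y. 
have := @cvg_pair _ _ _ (nbhs y) (nbhs y) (nbhs (0:R)) _ _ _ id (fun=> 0) cvg_id (cvg_cst _).
exact.
Qed.

Section Lin.
Variable (V : lmodType R) (l : V -> R).
Hypothesis lin : forall (a : R) (u v : V), l (a *: u + v) = a * l u + l v.
Lemma lin0 : l 0 = 0.
Proof. have := lin 1 0 0. rewrite scale1r addr0 mul1r => e.
have : l 0 + 0 = l 0 + l 0 by rewrite addr0. by move/addrI. Qed.
Lemma linD u v : l (u + v) = l u + l v.
Proof. by rewrite -[u]scale1r lin mul1r scale1r. Qed.
Lemma linZ a u : l (a *: u) = a * l u.
Proof. by rewrite -[a *: u]addr0 lin lin0 addr0. Qed.
Lemma linB u v : l (u - v) = l u - l v.
Proof. by rewrite -scaleN1r addrC lin mulN1r addrC. Qed.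
End Lin.

Lemma dualB (xs : X -> R) : is_dual xs -> forall u v, xs (u - v) = xs u - xs v.
Proof. by case=> lin _; apply: linB. Qed.

Lemma dual0 : is_dual (0 : X -> R).
Proof. split. by move=> a x y /=; rewrite mulr0 addr0. move=> x; exact: cvg_cst. Qed.

Lemma dualD (a b : X -> R) : is_dual a -> is_dual b -> is_dual (a + b).
Proof. case=> la ca [lb cb]; split.
  have E z : (a + b) z = a z + b z by []. by move=> t x y; rewrite !E la lb; ring.
move=> x; exact: continuousD (ca x) (cb x). Qed.

Lemma cconj_ge (h : X -> \bar R) w x : (coupling x w - h x <= cconj h w)%E.
Proof. by apply: ereal_sup_ubound; exists x. Qed.

Lemma cconj_le (h : X -> \bar R) w t :
  (cconj h w <= t)%E <-> forall x, (coupling x w - h x <= t)%E.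
Proof. split.
  by move=> le x; apply: le_trans le; apply: cconj_ge.
by move=> H; apply: ge_ereal_sup => _ [x _ <-]. Qed.

Lemma translateP (E : set (W * R)) e p : translate E e p <-> E (p + e).
Proof. split. by case=> z Ez <-; rewrite subrK. by move=> H; exists (p + e) => //; rewrite addrK. Qed.

Lemma coupling_neq_ninfty (x : X) (w : W) : coupling x w <> -oo%E.
Proof. by rewrite /coupling; case: ifP. Qed.

End Helpers.
Section Eco.
Context {R : realType} {X : tvsType R}.
Local Notation W := (W (R:=R) (X:=X)).
Variable g : X -> \bar R.
Hypothesis pg : proper_fun g.

Lemma cg_real (u : W) : domW (cconj g) u -> exists r, cconj g u = r%:E.
Proof.
case=> _ lt. case: pg => [[x0 gx0] gni].
have := cconj_ge g u x0. move: lt.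
case E: (cconj g u) => [r| |] //; first by exists r.
move=> _. move: (gni x0) gx0; case: (g x0) => [gr| |] // _ _.
by rewrite /coupling; case: ifP.
Qed.

Lemma cfin (x : X) (u : W) : (g x < +oo)%E -> domW (cconj g) u -> u.1.2 x < u.2.
Proof.
move=> gx Du; have [r Er] := cg_real u Du.
have := cconj_ge g u x; rewrite Er /coupling; case: ifP => // _.
move: (pg.2 x) gx; case: (g x) => [gr| |] //.
Qed.

Lemma hu_minor (u : W) (c : R) : cconj g u = c%:E ->
  forall z, (coupling z u - c%:E <= g z)%E.
Proof.
move=> Ec z; have := cconj_ge g u z; rewrite Ec.
move: (pg.2 z); case: (g z) => [gr| |] // _.
rewrite /coupling; case: ifP => // _; rewrite !lee_fin; lra.
by rewrite leey.
Qed.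

Lemma hu_econvex (u : W) (c : R) : inW u ->
  econvex_fun (fun z => coupling z u - c%:E)%E.
Proof.
case=> [[lx cx] [ly cy]] [z s] /=; rewrite /epiX /= => notin.
have inepi q : (coupling q.1 u - c%:E <= q.2%:E)%E -> u.1.2 q.1 < u.2 /\ u.1.1 q.1 - c <= q.2.
  by rewrite /coupling; case: ifP => // H; rewrite lee_fin.
case: (boolP (u.1.2 z < u.2)) => Hz.
- move: notin; rewrite /coupling Hz lee_fin => notin.
  exists (fun q => u.1.1 q.1 - q.2); split; last split.
  + move=> a p q /=; rewrite lx; change (a *: p.2) with (a * p.2); ring.
  + move=> q; have := (@continuousB _ _ _ (fun q : X * R => u.1.1 q.1) (fun q : X * R => q.2) q (fstc _ cx q) (sndc q)). exact.
  + move=> q H; have [_ {}H] := inepi q H; rewrite /= (linB _ _ lx). lra.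
- exists (fun q => u.1.2 q.1); split; last split.
  + by move=> a p q /=; rewrite ly.
  + exact: fstc.
  + move=> q H; have [{}H _] := inepi q H; rewrite /= (linB _ _ ly). move: Hz; rewrite -leNgt => Hz. lra.
Qed.

Lemma sep (h : X -> \bar R) (x : X) (y r : R) : econvex_fun h -> (forall z, (h z <= g z)%E) ->
  h x = y%:E -> r < y ->
  exists u : W, domW (cconj g) u /\ (r%:E <= coupling x u - cconj g u)%E.
Proof.
move=> hE hle hx ry.
have notin : ~ epiX h (x, r).
  by rewrite /epiX /= hx lee_fin; apply/negP; rewrite -ltNge.
have [l [lin [cl sepl]]] := hE _ notin.
set b := l (0,1).
have key q : epiX h q -> l (q.1, 0) - l (x, 0) + (q.2 - r) * b < 0.
  move=> /sepl. have -> : q - (x, r) = (q.1 - x, q.2 - r) by [].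
  rewrite pairdec (linD _ _ lin) (linZ _ _ lin) -/b.
  have -> : (q.1 - x, (0:R)) = (q.1, 0) - (x, 0).
    by apply: injective_projections => //=; rewrite subr0.
  by rewrite (linB _ _ lin).
have bneg : b < 0.
  have := key (x, y); rewrite /epiX /= hx lexx subrr add0r => /(_ isT).
  by rewrite pmulr_rlt0 // subr_gt0.
set B := - b.
have Bpos : 0 < B by rewrite /B oppr_gt0.
set a' := fun z : X => l (z, 0) / B.
have cl0 : continuous (fun z : X => l (z, 0)).
  by move=> z; apply: (@continuous_comp _ _ _ (fun z : X => (z, (0:R))) l z (pairc z) (cl _)).
have da : is_dual a'.
  split.
    by move=> t z1 z2; rewrite /a' paireq lin mulrDl mulrA.
  move=> z; have := @continuousM _ _ (fun z : X => l (z,0)) (fun=> B^-1) z (cl0 z) (cvg_cst _).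
  exact.
pose u0 : W := (a', 0, 1%R).
have cu z : coupling z u0 = (a' z)%:E.
  by rewrite /coupling /= ltr01.
have cle : (cconj g u0 <= (a' x - r)%:E)%E.
  apply/cconj_le => z; rewrite cu.
  move: (pg.2 z) (hle z); case E: (g z) => [gr| |] // _ hz.
  - have := key (z, gr); rewrite /epiX /= => /(_ hz) K.
    rewrite lee_fin /a'.
    set Lz := l (z, 0) / B; set Lx := l (x, 0) / B.
    have ez : l (z, 0) = Lz * B by rewrite /Lz divfK // gt_eqF.
    have ex : l (x, 0) = Lx * B by rewrite /Lx divfK // gt_eqF.
    move: K; rewrite ez ex -/B.
    have -> : b = - B by rewrite /B opprK.
    nra.
  - by rewrite addeNy leNye.
exists u0; split.
  split; first by split; [exact: da | exact: dual0].
  by apply: (le_lt_trans cle); rewrite ltey.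
rewrite cu; move: cle; case: (cconj g _) => [c| |] //=.
  rewrite !lee_fin; lra.
by rewrite leey.
Qed.

Lemma eco_le_g x : (eco g x <= g x)%E.
Proof. by apply: ge_ereal_sup => _ [h [_ hle] <-]. Qed.

Lemma ecoP (x : X) (t : \bar R) : (g x < +oo)%E ->
  (eco g x <= t)%E <-> (forall u : W, domW (cconj g) u -> (coupling x u - cconj g u <= t)%E).
Proof.
move=> gx; split.
  move=> le u Du; apply: le_trans le.
  have [c Ec] := cg_real u Du; rewrite Ec.
  apply: ereal_sup_ubound; exists (fun z => coupling z u - c%:E)%E => //; split.
    exact: hu_econvex Du.1.
  exact: hu_minor.
move=> H; apply: ge_ereal_sup => _ [h [hE hle] <-].
have hxg := hle x; case Eh: (h x) => [y| |].
- rewrite leNgt; apply/negP => ty.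
  case Et: t ty => [tr| |] // ty.
  + have [u [Du ru]] := sep _ _ _ ((tr + y) / 2) hE hle Eh ltac:(rewrite lte_fin in ty; lra).
    have := le_trans ru (H u Du); rewrite Et lee_fin; rewrite lte_fin in ty; lra.
  + have [u [Du ru]] := sep _ _ _ (y - 1) hE hle Eh ltac:(lra).
    by have := le_trans ru (H u Du); rewrite Et.
- by move: hxg gx; rewrite Eh leye_eq => /eqP ->; rewrite ltxx.
- by rewrite leNye.
Qed.
End Eco.
Section Main.
Context {R : realType} {X : tvsType R}.
Local Notation W := (W (R:=R) (X:=X)).
Variables (f g : X -> \bar R) (A : set X).
Hypotheses (pf : proper_fun f) (pg : proper_fun g)
  (dom : forall x, (f x < +oo)%E -> (g x < +oo)%E).

Lemma Dval (x : X) (u : W) : (g x < +oo)%E -> domW (cconj g) u ->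
  exists c, cconj g u = c%:E /\ coupling x u = (u.1.1 x)%:E.
Proof.
move=> gx Du; have [c Ec] := cg_real _ pg u Du; exists c; split => //.
by rewrite /coupling (cfin _ pg _ _ gx Du).
Qed.

Lemma eco_fin x : (g x < +oo)%E -> eco g x <> +oo%E.
Proof. move=> gx E; have := eco_le_g g x; rewrite E leye_eq => /eqP gE.
by move: gx; rewrite gE ltxx. Qed.

Lemma diff_nn x : diff_pinfty f (eco g) x <> -oo%E.
Proof.
rewrite /diff_pinfty; move: (pf.2 x) (@dom x) (@eco_fin x).
case: (f x) => [fr| |] //= _ H1 H2.
  have := H2 (H1 (ltry _)); case: (eco g x) => //.
Qed.

Lemma part1_x (a b : X -> R) (al t : R) (x : X) :
  (forall u : W, domW (cconj g) u ->
     (coupling x (((a + u.1.1)%R, b, al) : W) - (f x + deltaI A x) <= (t + fine (cconj g u))%:E)%E)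
  <-> (coupling x ((a, b, al) : W) - (diff_pinfty f (eco g) x + deltaI A x) <= t%:E)%E.
Proof.
rewrite /deltaI; case: asboolP => Ax; last first.
  have Hf : f x != -oo%E by rewrite gt_eqF // (pf.2 x).
  have Hd : diff_pinfty f (eco g) x != -oo%E by apply/eqP; exact: diff_nn.
  rewrite (addey Hd); split => [_|_ u _]; by rewrite ?(addey Hf) addeNy leNye.
rewrite !adde0 /diff_pinfty.
move: (pf.2 x) (@dom x); case Ef: (f x) => [fr| |] // _ domx; last first.
  have -> : (+oo - eco g x)%dE = +oo%E by case: (eco g x).
  by split => [_|_ u _]; rewrite addeNy leNye.
have gx := domx (ltry _).
rewrite {1 2}/coupling /=.
case: ifP => bx.
- have step : (forall u : W, domW (cconj g) u ->
     (((a + u.1.1) x)%:E - fr%:E <= (t + fine (cconj g u))%:E)%E) <->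
     (forall u : W, domW (cconj g) u -> (coupling x u - cconj g u <= (t - a x + fr)%:E)%E).
    split => H u Du; have [c [Ec Cu]] := Dval x u gx Du; have := H u Du;
      rewrite Ec Cu /= !lee_fin; rewrite -[(a + u.1.1) x]/(a x + u.1.1 x); lra.
  rewrite step -(ecoP _ pg _ _ gx).
  move: (@eco_fin x gx); case: (eco g x) => [e| |] // _ /=.
    by rewrite !lee_fin; split; lra.
  by split => _; rewrite ?addeNy ?leNye.
- have step : (forall u : W, domW (cconj g) u ->
     (+oo - fr%:E <= (t + fine (cconj g u))%:E)%E) <->
     (forall u : W, domW (cconj g) u -> (coupling x u - cconj g u <= -oo)%E).
    split => H u Du; have [c [Ec Cu]] := Dval x u gx Du; have := H u Du;
      by rewrite Ec Cu.
  rewrite step -(ecoP _ pg _ _ gx).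
  move: (@eco_fin x gx); case: (eco g x) => [e| |] // _ /=.
  by split => _; rewrite ?addeNy ?leNye.
Qed.

Lemma eco_real x (u0 : W) : (g x < +oo)%E -> domW (cconj g) u0 -> exists e, eco g x = e%:E.
Proof.
move=> gx Du0; move: (@eco_fin x gx).
case E: (eco g x) => [e| |] // _; first by exists e.
have := le_refl (eco g x); rewrite {2}E (ecoP _ pg _ _ gx) => /(_ u0 Du0).
by have [c [-> ->]] := Dval x u0 gx Du0.
Qed.

Lemma part2_x (a b : X -> R) (al t s : R) (w2 : W) (x : X) (u0 : W) :
  domW (cconj g) u0 ->
  (forall u : W, domW (cconj g) u ->
   (coupling x (((a + u.1.1)%R, b, al) : W) - (f x - coupling x w2)
      <= (t + (fine (cconj g u) - s))%:E)%E)
  <-> (coupling x ((a, b, al) : W) - (diff_pinfty f (eco g) x - coupling x w2 - s%:E)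
      <= t%:E)%E.
Proof.
move=> Du0.
have cN u : coupling x u != -oo%E by apply/eqP; exact: coupling_neq_ninfty.
case Ec2: (coupling x w2) => [cr| |]; last by have := cN w2; rewrite Ec2.
  rewrite /diff_pinfty; move: (pf.2 x) (@dom x); case Ef: (f x) => [fr| |] // _ domx; last first.
    have -> : (+oo - eco g x)%dE = +oo%E by case: (eco g x).
    by split => [_|_ u _]; rewrite /= addeNy leNye.
  have gx := domx (ltry _).
  have [e Ee] := eco_real x u0 gx Du0; rewrite Ee /=.
  rewrite {1 2}/coupling /=.
  case: ifP => bx.
  - have step : (forall u : W, domW (cconj g) u ->
       (((a + u.1.1) x)%:E - (fr - cr)%:E <= (t + (fine (cconj g u) - s))%:E)%E) <->
       (forall u : W, domW (cconj g) u -> (coupling x u - cconj g u <= (t - s - a x + fr - cr)%:E)%E).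
      split => H u Du; have [c [Ec Cu]] := Dval x u gx Du; have := H u Du;
        rewrite Ec Cu /= !lee_fin; rewrite -[(a + u.1.1) x]/(a x + u.1.1 x); lra.
    rewrite step -(ecoP _ pg _ _ gx) Ee !lee_fin; split; lra.
  - split => // H; have := H u0 Du0.
    by have [c [Ec Cu]] := Dval x u0 gx Du0; rewrite Ec.
rewrite !addeNy addNye /= !addey ?cN //.
split => // H.
by have := H u0 Du0; rewrite addey ?cN.
Qed.
End Main.

Lemma Wadd {R : realType} {X : tvsType R} (a b c d : X -> R) (e1 e2 : R) :
  ((a, b, e1) + (c, d, e2) : W (R:=R) (X:=X)) = ((a + c)%R, (b + d)%R, (e1 + e2)%R).
Proof. by []. Qed.

Lemma sA_real {R : realType} {X : tvsType R} (A : set X) (w : W (R:=R) (X:=X)) :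
  A !=set0 -> domW (cconj (deltaI A)) w -> exists s, cconj (deltaI A) w = s%:E.
Proof.
move=> [a0 Aa0] [_ lt]; have := cconj_ge (deltaI A) w a0.
rewrite /deltaI; case: asboolP => // _; rewrite sube0.
move: lt; case: (cconj _ w) => [s| |] // _; first by exists s.
by rewrite leeNy_eq => /eqP /coupling_neq_ninfty.
Qed.

Theorem proposition5p4 (R : realType) (X : tvsType R)
    (f g : X -> \bar R) (A : set X) :
  hausdorff_space X ->
  (exists x : X, x != 0) ->
  proper_fun f -> convex_fun f ->
  proper_fun g -> convex_fun g ->
  (forall x, (f x < +oo)%E -> (g x < +oo)%E) ->
  A !=set0 ->
  Lambda f g A = epiW (cconj (fun x => diff_pinfty f (eco g) x + deltaI A x)%E) /\
  Omega f g A = Omega_rhs f g A.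
Proof.
move=> _ _ pf _ pg _ dom Ane; split.
  apply/seteqP; split => -[[[a b] al] t]; rewrite /Lambda /epiW /=.
    case=> iw H; split => //; apply/cconj_le => x.
    apply/(@part1_x _ _ f g A pf pg dom a b al t x) => u Du.
    have := H u Du; rewrite translateP /epiW /= Wadd !addr0 => -[_].
    by move/cconj_le => /(_ x).
  case=> iw /cconj_le H; split => // u Du.
  rewrite translateP /epiW /= Wadd !addr0; split.
    by split; [exact: dualD iw.1 Du.1.1 | exact: iw.2].
  apply/cconj_le => x.
  exact: (proj2 (@part1_x _ _ f g A pf pg dom a b al t x) (H x) u Du).
have [[u0 Du0]|D0] := pselect (exists u, domW (cconj g) u).
  apply/seteqP; split => -[[[a b] al] t]; rewrite /Omega /Omega_rhs /epiW /=.
    case=> iw [w' [Dw' H]]; exists w'; split => //; split => //.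
    have [s Es] := sA_real _ _ Ane Dw'.
    apply/cconj_le => x; rewrite Es.
    apply/(@part2_x _ _ f g pf pg dom _ _ _ _ _ _ _ _ Du0) => u Du.
    have [c Ec] := cg_real _ pg u Du.
    have := H u Du; rewrite translateP /epiW /= Wadd !addr0 Ec Es /= => -[_].
    by move/cconj_le => /(_ x).
  case=> w' [Dw' [iw /cconj_le H]]; split => //; exists w'; split => // u Du.
  have [s Es] := sA_real _ _ Ane Dw'.
  have [c Ec] := cg_real _ pg u Du.
  rewrite translateP /epiW /= Wadd !addr0; split.
    by split; [exact: dualD iw.1 Du.1.1 | exact: iw.2].
  apply/cconj_le => x; rewrite Ec Es /=.
  have := H x; rewrite Es => Hx.
  have := proj2 (@part2_x _ _ f g pf pg dom a b al t s _ x u0 Du0) Hx u Du.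
  by rewrite Ec.
have diffoo x : diff_pinfty f (eco g) x = +oo%E.
  rewrite /diff_pinfty; move: (pf.2 x) (@dom x); case: (f x) => [fr| |] // _ domx.
    have gx := domx (ltry _).
    have -> : eco g x = -oo%E.
      by apply/eqP; rewrite -leeNy_eq (ecoP _ pg _ _ gx) => u Du; exfalso; apply: D0; exists u.
    by [].
pose w1 : W (R:=R) (X:=X) := (0, 0, 1%R).
have Dw1 : domW (cconj (deltaI A)) w1.
  split; first by split; exact: dual0.
  apply: (@le_lt_trans _ _ 0%E); last by rewrite ltey.
  apply/cconj_le => x; rewrite /coupling /= ltr01 /deltaI.
  by case: asboolP => _; rewrite ?sube0 ?addeNy ?leNye.
apply/seteqP; split => -[[[a b] al] t]; rewrite /Omega /Omega_rhs /epiW /=.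
  case=> iw _; exists w1; split => //; split => //.
  have [s Es] := sA_real _ _ Ane Dw1.
  apply/cconj_le => x; rewrite diffoo Es.
  have -> : coupling x (- w1.1.1, - w1.1.2, w1.2)%R = 0%E.
    by rewrite /coupling /= !oppr0 ltr01.
  by rewrite sube0 /= addeNy leNye.
case=> w' [Dw' [iw _]]; split => //; exists w'; split => // u Du.
by exfalso; apply: D0; exists u.
Qed.
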